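(* Let $G=(V,E)$ be a finite simple graph with at least one vertex, and let $r$ be the largest eigenvalue of the adjacency matrix of its connection graph $G'$. Then the spectral radius $\rho$ of the Hodge Laplacian $H=(d+d^T)^2$ of $G$ satisfies $$\rho \le (1+r) - \frac{1}{1+r}.$$
   Context: Let $G=(V,E)$ be a finite simple graph. Its associated $1$-dimensional simplicial complex is the set of simplices $X=\{\{v\}: v\in V\}\cup E$, where each edge is regarded as a $2$-element subset of $V$; put $N=|V|+|E|$ and index $N\times N$ matrices by $X$. The connection graph $G'$ has vertex set $X$, and two distinct $x,y\in X$ are adjacent iff $x\cap y\neq\emptyset$. For the Hodge Laplacian, fix an orientation of each edge; for an edge $x=\{a,b\}$ oriented from $a$ to $b$ set $d(x,\{a\})=-1$, $d(x,\{b\})=1$, and let all other entries of $d$ be $0$. The Hodge Laplacian is $H=(d+d^T)^2$; it is the direct sum of the Kirchhoff Laplacian $H_0$ (on vertices) and the $1$-form Laplacian $H_1$ (on edges), and its spectrum does not depend on the chosen orientation. *)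

(* Defs.v *)
From HB Require Import structures.
From mathcomp Require Import all_boot all_order all_algebra.
Set Implicit Arguments. Unset Strict Implicit. Unset Printing Implicit Defensive.
Import Order.TTheory GRing.Theory Num.Theory.
Local Open Scope ring_scope.

(* A finite simple graph is a symmetric irreflexive relation e on a finType V;
   its edges are the 2-element sets {x,y} with e x y. *)
Definition simple_graph (V : finType) (e : rel V) : Prop :=
  symmetric e /\ irreflexive e.

Definition is_simplex (V : finType) (e : rel V) (A : {set V}) : bool :=
  (#|A| == 1)%N || [exists x, exists y, e x y && (A == [set x; y])].

Definition simplices (V : finType) (e : rel V) : {set {set V}} :=
  [set A | is_simplex e A].

(* N = |V| + |E|, simplices enumerated by 'I_N *)
Definition nsimp (V : finType) (e : rel V) : nat := #|simplices e|.

Definition sx (V : finType) (e : rel V) (i : 'I_(nsimp e)) : {set V} :=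
  @enum_val _ (mem (simplices e)) i.

Definition conn_adj (R : pzRingType) (V : finType) (e : rel V) : 'M[R]_(nsimp e) :=
  \matrix_(i, j) ((i != j) && (sx i :&: sx j != set0))%:R.

(* Orientation: an edge is oriented towards its vertex of larger enum_rank. *)
Definition edge_head (V : finType) (x : {set V}) (v : V) : bool :=
  (v \in x) && [forall w in x, (enum_rank w <= enum_rank v)%N].

(* Exterior derivative d (entries d(x,{v})), with d(x,{a}) = -1, d(x,{b}) = 1
   for the edge x oriented from a to b. *)
Definition dmat (R : pzRingType) (V : finType) (e : rel V) : 'M[R]_(nsimp e) :=
  \matrix_(i, j)
    if (#|sx i| == 2)%N && [exists v, (sx j == [set v]) && (v \in sx i)] then
      (if [exists v, (sx j == [set v]) && edge_head (sx i) v] then 1 else -1)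
    else 0.

Definition hodge (R : pzRingType) (V : finType) (e : rel V) : 'M[R]_(nsimp e) :=
  let D := dmat R e + (dmat R e)^T in D *m D.

(* Main.v *)
Require Import Defs.
From HB Require Import structures.
From mathcomp Require Import all_boot all_order all_algebra.
From mathcomp Require Import complex ring lra.
Import Order.TTheory GRing.Theory Num.Theory.
Local Open Scope ring_scope.
Section RaySec.
Local Open Scope sesquilinear_scope.

Variable R : rcfType.
Local Notation C := (complex R).
Local Notation toC := (real_complex R).

Lemma eig_real n (A : 'M[R]_n) (a : R) : eigenvalue (map_mx toC A) (toC a) -> eigenvalue A a.
Proof.
by rewrite !eigenvalue_root_char -map_char_poly fmorph_root.
Qed.

Lemma toC_real (a : R) : (toC a) \is Num.real.
Proof. by rewrite complex_real. Qed.

Lemma conj_toC (a : R) : (toC a)^* = toC a.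
Proof. exact/CrealP/toC_real. Qed.

Lemma toC_quad n (x : 'rV[R]_n) A : toC ((x *m A *m x^T) 0 0) =
  ((map_mx toC x) *m (map_mx toC A) *m (map_mx toC x)^T) 0 0.
Proof.
rewrite !mxE rmorph_sum; apply: eq_bigr => i _; rewrite !mxE rmorphM rmorph_sum.
congr (_ * _); apply: eq_bigr => j _; by rewrite !mxE rmorphM.
Qed.

Lemma rayleigh n (A : 'M[R]_n) (r : R) : A^T = A ->
  (forall l, eigenvalue A l -> l <= r) ->
  forall x : 'rV[R]_n, (x *m A *m x^T) 0 0 <= r * (x *m x^T) 0 0.
Proof.
move=> Asym hmax x.
pose Ac := map_mx toC A.
have Aherm : Ac \is hermsymmx.
  apply: realsym_hermsym.
    apply/is_hermitianmxP; rewrite expr0 scale1r.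
    by rewrite map_mx_id // /Ac map_trmx Asym.
  by apply/mxOverP => i j; rewrite mxE toC_real.
have /hermitian_normalmx /orthomx_spectralP AcE := Aherm.
set P := spectralmx Ac in AcE; set sd := spectral_diag Ac in AcE.
have Pu : P \is unitarymx by apply: spectral_unitarymx.
have Punit : P \in unitmx by apply: spectral_unit.
have sdreal : sd \is a mxOver Num.real by apply: hermitian_spectral_diag_real.
have sdle : forall j, sd 0 j <= toC r.
  move=> j; have /complex_realP [a ha] := mxOverP sdreal 0 j.
  rewrite ha lecR; apply: hmax; apply: eig_real; rewrite -ha.
  apply/eigenvalueP; exists (row j P).
    have PAc : P *m Ac = diag_mx sd *m P by rewrite AcE !mulmxA mulmxV // mul1mx.
    rewrite -row_mul PAc; apply/rowP => k; rewrite mul_diag_mx !mxE.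
    done.
  rewrite rowE mulmx_free_eq0 ?row_free_unit //.
  by apply/eqP => /matrixP /(_ 0 j); rewrite !mxE !eqxx /= => /eqP; rewrite oner_eq0.
have PtP : P^t* *m P = 1%:M by rewrite -invmx_unitary // mulVmx.
pose xc := map_mx toC x.
pose w := xc *m P^t*.
have xcc : xc^t* = xc^T by apply/matrixP => i j; rewrite !mxE conj_toC.
have E1 : toC ((x *m A *m x^T) 0 0) = (w *m diag_mx sd *m w^t*) 0 0.
  rewrite /w trmx_mul map_mxM trmxCK xcc.
  have -> : xc *m P^t* *m diag_mx sd *m (P *m xc^T) = xc *m Ac *m xc^T.
    by rewrite [in RHS]AcE invmx_unitary // !mulmxA.
  exact: toC_quad.
have E2 : toC ((x *m x^T) 0 0) = (w *m w^t*) 0 0.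
  rewrite /w trmx_mul map_mxM trmxCK xcc mulmxA -(mulmxA xc) PtP mulmx1.
  rewrite !mxE rmorph_sum; apply: eq_bigr => i _; by rewrite !mxE rmorphM.
have E3 : toC (r * (x *m x^T) 0 0) = toC r * (w *m w^t*) 0 0 by rewrite -E2 rmorphM.
rewrite -lecR E3 E1 mul_mx_diag !mxE mulr_sumr.
apply: ler_sum => j _; rewrite !mxE.
set a := \sum_(k < n) _.
by rewrite mulrAC [X in _ <= X]mulrC; apply: ler_wpM2l; [exact: mul_conjC_ge0|exact: sdle].
Qed.
End RaySec.

Section Comb.
Variables (R : rcfType) (V : finType) (e : rel V) (w0 : V).
Local Notation N := (nsimp e).

Definition ed (i : 'I_N) := (#|sx i| == 2)%N.
Definition inc (i j : 'I_N) := ed i && [exists v, (sx j == [set v]) && (v \in sx i)].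
Local Notation d := (dmat R e).

Lemma d0 i j : ~~ inc i j -> d i j = 0.
Proof. by rewrite mxE /inc => /negbTE ->. Qed.

Lemma d_norm i j : `|d i j| = (inc i j)%:R.
Proof.
rewrite mxE /inc; case: ifP => _ /=; last by rewrite normr0.
by case: ifP => _; rewrite ?normrN normr1.
Qed.

Lemma d_sq i j : d i j * d i j = (inc i j)%:R.
Proof.
rewrite mxE /inc; case: ifP => _ /=; last by rewrite mulr0.
by case: ifP => _; rewrite ?mulrNN mulr1.
Qed.

Lemma inc_ed i j : inc i j -> ed i && ~~ ed j.
Proof.
case/andP => -> /existsP [v /andP [/eqP hv _]].
by rewrite /ed hv cards1.
Qed.

Lemma inc_meet i j : inc i j -> (i != j) && (sx i :&: sx j != set0).
Proof.
move=> h; have /andP [hi hj] := @inc_ed i j h.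
apply/andP; split; first by apply: contraNneq hj => <-.
case/andP: h => _ /existsP [v /andP [/eqP sj vi]].
by apply/set0Pn; exists v; rewrite inE vi sj set11.
Qed.

Definition DD := locked (d + d^T).

Lemma DDE i j : DD i j = d i j + d j i.
Proof. by rewrite /DD -lock !mxE. Qed.

Lemma DD_type i j : DD i j != 0 -> ed i != ed j.
Proof.
rewrite DDE; case hij: (inc i j).
  by have /andP [-> /negbTE ->] := @inc_ed i j hij.
case hji: (inc j i).
  by have /andP [-> /negbTE ->] := @inc_ed j i hji.
by rewrite !d0 ?hij ?hji // addr0 eqxx.
Qed.

Lemma DD_bound i j : `|DD i j| <= (conn_adj R e) i j.
Proof.
rewrite DDE /conn_adj [X in _ <= X]mxE; case hij: (inc i j).
  have /andP [hi hj] := @inc_ed i j hij.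
  have hji : inc j i = false by apply/negP => /inc_ed /andP [hj2 _]; rewrite hj2 in hj.
  by rewrite (@d0 j i) ?hji // addr0 d_norm hij (@inc_meet i j hij).
case hji: (inc j i); last by rewrite !d0 ?hij ?hji // addr0 normr0 ler0n.
rewrite d0 ?hij // add0r d_norm hji.
have /andP [ne mt] := @inc_meet j i hji.
by rewrite eq_sym ne setIC mt.
Qed.


Lemma simp1 w : [set w] \in simplices e.
Proof. by rewrite inE /is_simplex cards1. Qed.

Definition vidx (w : V) : 'I_N := enum_rank_in (simp1 w0) [set w].

Lemma sx_vidx w : sx (vidx w) = [set w].
Proof. exact: (enum_rankK_in (simp1 w0) (simp1 w)). Qed.

Lemma sx_inj : injective (@sx V e).
Proof. exact: enum_val_inj. Qed.

Lemma card_single (S : {set V}) :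
  #|[set k : 'I_N | [exists v, (sx k == [set v]) && (v \in S)]]| = #|S|.
Proof.
have -> : [set k : 'I_N | [exists v, (sx k == [set v]) && (v \in S)]] = vidx @: S.
  apply/setP => k; rewrite inE; apply/existsP/imsetP.
    case=> v /andP [/eqP hk vS]; exists v => //; apply: sx_inj.
    by rewrite sx_vidx hk.
  by case=> v vS ->; exists v; rewrite sx_vidx eqxx vS.
apply: card_imset => v w h.
by have := congr1 (@sx V e) h; rewrite !sx_vidx => /set1_inj.
Qed.

Lemma sum_bool_card (b : pred 'I_N) :
  \sum_k ((b k)%:R : R) = #|[set k | b k]|%:R.
Proof.
rewrite -sum1_card natr_sum [in RHS]big_mkcond /=; apply: eq_bigr => k _.
by rewrite inE; case: (b k).
Qed.

Lemma H_edges i j : ed i -> ed j -> (DD *m DD) i j = \sum_k d i k * d j k.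
Proof.
move=> hi hj; rewrite mxE; apply: eq_bigr => k _; rewrite !DDE.
rewrite (@d0 k i) ?(@d0 k j) ?addr0 ?add0r //.
  by apply/negP => /inc_ed /andP [_]; rewrite hj.
by apply/negP => /inc_ed /andP [_]; rewrite hi.
Qed.

Lemma inc2 i j k : ed i -> ed j -> (inc i k && inc j k) =
  [exists v, (sx k == [set v]) && (v \in sx i :&: sx j)].
Proof.
move=> hi hj; rewrite /inc hi hj /=.
apply/andP/existsP.
  case=> /existsP [v /andP [/eqP hv vi]] /existsP [w /andP [/eqP hw wj]].
  exists v; rewrite hv eqxx inE vi /=.
  by move: hw; rewrite hv => /set1_inj ->.
case=> v /andP [hv]; rewrite inE => /andP [vi vj].
by split; apply/existsP; exists v; rewrite hv.
Qed.

Lemma H_bound_edges i j : ed i -> ed j ->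
  `|(DD *m DD) i j| <= #|sx i :&: sx j|%:R.
Proof.
move=> hi hj; rewrite H_edges //.
apply: le_trans (ler_norm_sum _ _ _) _.
rewrite -card_single -sum_bool_card le_eqVlt; apply/orP; left; apply/eqP.
apply: eq_bigr => k _; rewrite normrM !d_norm -natrM mulnb inc2 //.
Qed.

Lemma H_diag i : ed i -> (DD *m DD) i i = 2%:R.
Proof.
move=> hi; rewrite H_edges //.
have -> : \sum_k d i k * d i k = \sum_k (((inc i k) && (inc i k))%:R : R).
  by apply: eq_bigr => k _; rewrite d_sq andbb.
rewrite sum_bool_card.
have -> : [set k | inc i k && inc i k] = [set k : 'I_N | [exists v, (sx k == [set v]) && (v \in sx i :&: sx i)]].
  by apply/setP => k; rewrite !inE inc2.
by rewrite card_single setIid (eqP hi).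
Qed.

Lemma meet_card i j : ed i -> ed j -> i != j -> (#|sx i :&: sx j| <= 1)%N.
Proof.
move=> hi hj ne; rewrite leqNgt; apply/negP => h2.
have hI : #|sx i :&: sx j| = 2%N.
  apply/eqP; rewrite eqn_leq h2 andbT -(eqP hi); exact: subset_leq_card (subsetIl _ _).
have Ei : sx i :&: sx j = sx i.
  apply/eqP; rewrite eqEcard subsetIl hI (eqP hi) leqnn //.
have Ej : sx i :&: sx j = sx j.
  apply/eqP; rewrite eqEcard subsetIr hI (eqP hj) leqnn //.
by move/eqP: ne; apply; apply: sx_inj; rewrite -Ei Ej.
Qed.


Lemma DD_diag i : DD i i = 0.
Proof. by apply/eqP/negPn/negP => h; move: (@DD_type i i h); rewrite eqxx. Qed.

Lemma H_mixed i j : ed i -> ~~ ed j -> (DD *m DD) i j = 0.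
Proof.
move=> hi hj; rewrite mxE big1 // => k _.
have [->|nz] := eqVneq (DD i k) 0; first by rewrite mul0r.
have hk : ~~ ed k by move: (@DD_type i k nz); rewrite hi; case: (ed k).
have [->|nz2] := eqVneq (DD k j) 0; first by rewrite mulr0.
by move: (@DD_type k j nz2); rewrite (negbTE hk) (negbTE hj).
Qed.

Definition PE : 'M[R]_N := diag_mx (\row_i ((ed i)%:R : R)).
Definition MM : 'M[R]_N := - (2%:R *: PE) + DD + PE *m (DD *m DD).

Lemma MM_bound i j : `|MM i j| <= (conn_adj R e) i j.
Proof.
have -> : MM i j = - (2%:R * ((ed i)%:R *+ (i == j))) + DD i j + (ed i)%:R * (DD *m DD) i j.
  rewrite /MM /PE mul_diag_mx; set HH := DD *m DD; rewrite !mxE /=; done.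
have [<-|ne] := eqVneq i j.
  rewrite DD_diag /conn_adj [X in _ <= X]mxE eqxx /= addr0 mulr1n.
  case hi: (ed i); last by rewrite !mul0r mulr0 oppr0 add0r normr0.
  by rewrite H_diag // !mul1r mulr1 addrC subrr normr0.
rewrite mulr0n mulr0 oppr0 add0r.
case hi: (ed i); last by rewrite mul0r addr0 DD_bound.
case hj: (ed j); last by rewrite H_mixed ?hj // mulr0 addr0 DD_bound.
have -> : DD i j = 0.
  by apply/eqP/negPn/negP => h; move: (@DD_type i j h); rewrite hi hj.
rewrite add0r mul1r /conn_adj [X in _ <= X]mxE ne /=.
apply: le_trans (@H_bound_edges i j hi hj) _.
have [E0|nE0] := eqVneq (sx i :&: sx j) set0; first by rewrite E0 cards0.
by rewrite ler_nat; apply: meet_card; rewrite ?hi ?hj.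
Qed.

End Comb.

Lemma arith (R : rcfType) (k r m : R) : 0 <= k -> 0 < m ->
  (forall s, (k * s + (s + k - 2) * k) * m <= r * ((s * s + k) * m)) ->
  `|k| <= (1 + r) - (1 + r)^-1.
Proof.
move=> k0 m0 h.
set t := Num.sqrt (k * k + 4).
have t0 : 0 <= t by apply: sqrtr_ge0.
have tt : t * t = k * k + 4 by rewrite -expr2 sqr_sqrtr //; nra.
set l := (k + t) / 2.
have lpos : 0 < l.
  have : 0 < t by rewrite sqrtr_gt0; nra.
  rewrite /l; lra.
have ll : l * l = k * l + 1 by rewrite /l; nra.
set s := l + 1 - k.
have hs := h s.
have id : k * s + (s + k - 2) * k = (l - 1) * (s * s + k) by rewrite /s; nra.
have q0 : 0 < s * s + k.
  have : 0 < s by rewrite /s; nra.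
  nra.
rewrite id in hs.
have qm : 0 < (s * s + k) * m by apply: mulr_gt0.
have lr : l - 1 <= r.
  rewrite leNgt; apply/negP => hlt.
  have : 0 < (l - 1 - r) * ((s * s + k) * m) by apply: mulr_gt0 => //; lra.
  nra.
rewrite ger0_norm //.
have mu0 : 0 < 1 + r by lra.
have kE : k = l - l^-1.
  apply: (mulIf (lt0r_neq0 lpos)); rewrite mulrBl mulVf ?(lt0r_neq0 lpos) //; lra.
rewrite kE lerB //; first lra.
rewrite lef_pV2 ?posrE //; lra.
Qed.



Lemma quadE (R : comPzRingType) n (x : 'rV[R]_n) (B : 'M[R]_n) :
  (x *m B *m x^T) 0 0 = \sum_i \sum_j x 0 i * B i j * x 0 j.
Proof.
rewrite mxE; under eq_bigr do rewrite !mxE mulr_suml.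
rewrite exchange_big /=; apply: eq_bigr => i _; apply: eq_bigr => j _.
by [].
Qed.

Lemma quad_cmp (R : realDomainType) n (x : 'rV[R]_n) (B A : 'M[R]_n) :
  (forall i j, `|B i j| <= A i j) ->
  (x *m B *m x^T) 0 0 <= (map_mx Num.norm x *m A *m (map_mx Num.norm x)^T) 0 0.
Proof.
move=> h; rewrite !quadE; apply: ler_sum => i _; apply: ler_sum => j _.
rewrite !mxE; apply: le_trans (ler_norm _) _.
rewrite !normrM; apply: ler_wpM2r => //; apply: ler_wpM2l => //.
Qed.

Lemma sq_norm (R : realDomainType) n (x : 'rV[R]_n) :
  (map_mx Num.norm x *m (map_mx Num.norm x)^T) 0 0 = (x *m x^T) 0 0.
Proof.
rewrite !mxE; apply: eq_bigr => i _; rewrite !mxE -normrM ger0_norm //.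
by rewrite -expr2 sqr_ge0.
Qed.

Lemma sq_gt0 (R : realDomainType) n (x : 'rV[R]_n) : x != 0 -> 0 < (x *m x^T) 0 0.
Proof.
move=> nz; have [i xi] : exists i, x 0 i != 0.
  apply/existsP; apply: contraNT nz; rewrite negb_exists => /forallP h.
  by apply/eqP/rowP => i; rewrite mxE; apply/eqP; move: (h i); rewrite negbK.
rewrite mxE (bigD1 i) //= ltr_pwDl //.
  by rewrite !mxE -expr2 exprn_even_gt0.
by apply: sumr_ge0 => j _; rewrite !mxE -expr2 sqr_ge0.
Qed.

Section MainSec.
Variables (R : rcfType) (V : finType) (e : rel V) (w0 : V).
Local Notation N := (nsimp e).
Local Notation D := (DD R V e).
Local Notation P := (PE R V e).
Local Notation A := (conn_adj R e).

Lemma DDt : D^T = D.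
Proof. by rewrite /DD -lock linearD /= trmxK addrC. Qed.

Lemma PEt : P^T = P.
Proof. by rewrite /PE tr_diag_mx. Qed.

Lemma PEPE : P *m P = P.
Proof.
apply/matrixP => i j; rewrite /PE mul_diag_mx !mxE.
by case: (ed V e i); case: (i == j); rewrite ?mulr1 ?mulr0 ?mul0r ?mulr0n ?mulr1n.
Qed.

Lemma PED : P *m D = D *m (1%:M - P).
Proof.
apply/matrixP => i j; rewrite /PE mulmxBr mulmx1 mul_diag_mx mul_mx_diag !mxE.
have [->|nz] := eqVneq (D i j) 0; first by rewrite !mulr0 !mul0r subr0.
have := @DD_type R V e i j nz; case: (ed V e i); case: (ed V e j) => //= _.
  by rewrite mulr0 mul1r subr0.
by rewrite mulr1 mul0r subrr.
Qed.

Lemma QD : (1%:M - P) *m D = D *m P.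
Proof. by rewrite mulmxBl mul1mx PED mulmxBr mulmx1 opprB addrC subrK. Qed.

Lemma PEH : P *m (D *m D) = (D *m D) *m P.
Proof. by rewrite mulmxA PED -[LHS]mulmxA QD mulmxA. Qed.

Lemma conn_sym : A^T = A.
Proof.
apply/matrixP => i j; rewrite !mxE eq_sym setIC //.
Qed.

Lemma MM_ray (r : R) (hrmax : forall l : R, eigenvalue A l -> l <= r) (x : 'rV[R]_N) :
  (x *m MM R V e *m x^T) 0 0 <= r * (x *m x^T) 0 0.
Proof.
apply: (le_trans (@quad_cmp _ _ x _ _ (@MM_bound R V e w0))).
by rewrite -(@sq_norm _ _ x); apply: (@rayleigh R _ A r) => //; exact: conn_sym.
Qed.

Lemma key (r : R) (hrmax : forall l : R, eigenvalue A l -> l <= r)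
  (y : 'rV[R]_N) (k : R) :
  y != 0 -> y *m P = 0 -> y *m (D *m D) = k *: y -> `|k| <= (1 + r) - (1 + r)^-1.
Proof.
move=> ynz yP yH.
set w := y *m D.
set m := (y *m y^T) 0 0.
have m0 : 0 < m by apply: sq_gt0.
have wP : w *m P = w.
  by rewrite /w -mulmxA -QD mulmxA mulmxBr mulmx1 yP subr0.
have yw : y *m w^T = 0.
  by rewrite -wP trmx_mul PEt mulmxA yP mul0mx.
have wy : w *m y^T = 0.
  by rewrite -[w]wP -mulmxA -PEt -trmx_mul yP trmx0 mulmx0.
have ww : w *m w^T = k *: (y *m y^T).
  by rewrite /w trmx_mul DDt !mulmxA -[y *m D *m D]mulmxA yH -scalemxAl.
have wD : w *m D = k *: y by rewrite /w -mulmxA.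
have wH : w *m (D *m D) = k *: w.
  have -> : w *m (D *m D) = (y *m (D *m D)) *m D by rewrite /w !mulmxA.
  by rewrite yH -scalemxAl.
have k0 : 0 <= k.
  have : 0 <= (w *m w^T) 0 0 by rewrite mxE; apply: sumr_ge0 => i _; rewrite !mxE -expr2 sqr_ge0.
  by rewrite ww mxE -/m pmulr_lge0.
apply: (@arith R k r m k0 m0) => s.
set x := s *: y + w.
have xx : x *m x^T = (s * s + k) *: (y *m y^T).
  rewrite /x linearD /= linearZ /= !mulmxDl !mulmxDr -!scalemxAl -!scalemxAr.
  by rewrite yw wy ww !scaler0 addr0 add0r scalerA scalerDl.
have xM : x *m MM R V e = k *: y + (s + k - 2) *: w.
  rewrite /x /MM !mulmxDr !mulmxDl !mulmxN -!scalemxAl !mulmxA.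
  rewrite -!scalemxAr yP wP !mul0mx -(mulmxA w D D) wH -/w.
  rewrite wD !scaler0 oppr0 add0r add0r; apply/rowP => i; rewrite !mxE; ring.
have xMx : x *m MM R V e *m x^T = (k * s + (s + k - 2) * k) *: (y *m y^T).
  rewrite xM /x linearD /= linearZ /= !mulmxDl !mulmxDr -!scalemxAl -!scalemxAr.
  rewrite yw wy ww !scaler0 addr0 add0r !scalerA -scalerDl; congr (_ *: _); ring.
have := @MM_ray r hrmax x.
by rewrite xMx xx /m !mxE.
Qed.

End MainSec.

Theorem mainTheorem3 (R : rcfType) (V : finType) (e : rel V)
  (hG : simple_graph e) (hV : (0 < #|V|)%N) (r : R)
  (hr : eigenvalue (conn_adj R e) r)
  (hrmax : forall l : R, eigenvalue (conn_adj R e) l -> l <= r) :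
  forall rho : R, eigenvalue (hodge R e) rho ->
    `|rho| <= (1 + r) - (1 + r)^-1.
Proof.
move=> rho /eigenvalueP [v vH vnz].
case/card_gt0P: hV => w0 _.
have hE : hodge R e = DD R V e *m DD R V e by rewrite /hodge /DD -lock.
rewrite hE in vH.
set D := DD R V e in vH *.
set P := PE R V e.
have QP : (1%:M - P) *m P = 0 by rewrite mulmxBl mul1mx PEPE subrr.
have keyR := @key R V e w0 r hrmax.
have [vV0|vVnz] := eqVneq (v *m (1%:M - P)) 0.
  have vP : v *m P = v.
    by move/eqP: vV0; rewrite mulmxBr mulmx1 subr_eq0 => /eqP <-.
  have [->|rnz] := eqVneq rho 0.
    have r0 : 0 <= r.
      pose i0 := vidx V e w0 w0.
      have := @rayleigh R _ (conn_adj R e) r (conn_sym R V e) hrmax (delta_mx 0 i0).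
      by rewrite -rowE trmx_delta -colE mul_delta_mx !mxE !eqxx /= mulr1.
    have h1 : 0 < 1 + r by lra.
    rewrite normr0 subr_ge0; apply: (@le_trans _ _ 1); last lra.
    by rewrite invf_le1 //; lra.
  apply: (keyR (v *m D) rho).
  - apply/eqP => y0.
    have : (v *m D *m (v *m D)^T) 0 0 = rho * (v *m v^T) 0 0.
      by rewrite trmx_mul DDt !mulmxA -[v *m D *m D]mulmxA vH -scalemxAl !mxE.
    rewrite y0 mul0mx mxE => /esym /eqP; rewrite mulf_eq0 (negbTE rnz) /=.
    by rewrite gt_eqF // (@sq_gt0 _ _ v vnz).
  - by rewrite -{1}vP -(mulmxA v P D) PED mulmxA -(mulmxA (v *m D)) QP mulmx0.
  - by rewrite !mulmxA -[v *m D *m D]mulmxA vH -scalemxAl.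
apply: (keyR _ rho vVnz).
  by rewrite -mulmxA QP mulmx0.
have E : (1%:M - P) *m (D *m D) = (D *m D) *m (1%:M - P) by rewrite mulmxBl mulmxBr mul1mx mulmx1 PEH.
by rewrite -mulmxA E mulmxA vH scalemxAl.
Qed.
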